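(* Let $\sigma$ have substitution matrix $M_\sigma=\begin{pmatrix}A&C\\0&B\end{pmatrix}$ with $A,B$ primitive, $C\neq0$ and $\rho(A)>\rho(B)>1$, and let $\Omega$ be the tiling space of the tile substitution $\mathcal G$ associated with $\sigma$. Put $\alpha=\log\rho(B)/\log\rho(A)$. Then there exists $K>0$ such that for every $\mathcal T\in\Omega$ and every $t>0$, $$N_{\mathcal T}(\mathcal B,t)\le K\,t^\alpha .$$
   Context: $\mathcal A=\{1,\dots,N\}$, $\sigma:\mathcal A\to\mathcal A^+$ a substitution; $M_\sigma$ has $(a,b)$ entry equal to the number of occurrences of $a$ in $\sigma(b)$; $\mathcal B$ is the set of letters indexing the block $B$. Let $\xi_1,\dots,\xi_N>0$ satisfy $|\sigma^k(i)|/(\xi_i\rho(A)^k)\to1$ as $k\to\infty$ (they form a left eigenvector of $M_\sigma$ for $\lambda:=\rho(A)$). Associated tile substitution: for $a\in\mathcal A$, the prototile $I_a$ is the interval of length $\xi_a$ centered at $0$, labeled $a$; for $v\in\mathcal A$ with $\sigma(v)=w_1\cdots w_m$, $\mathcal G(I_v)$ is the patch of consecutive translates of $I_{w_1},\dots,I_{w_m}$ (left to right) exactly subdividing $\lambda I_v$; $\mathcal G(I+u)=\mathcal G(I)+\lambda u$. The tiling space $\Omega$ is the set of tilings of $\mathbb R$ by translates of the $I_a$ all of whose finite subpatches are subpatches of some $\mathcal G^n(I_a)+u$. For $\mathcal T\in\Omega$ and $t>0$, $N_{\mathcal T}(\mathcal B,t)$ is the number of tiles of $\mathcal T$ that are translates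 of some $I_b$, $b\in\mathcal B$, and are contained in $[0,t]$. *)

(* Defs.v *)
From Stdlib Require Import Reals List Arith.
Import ListNotations.
Open Scope R_scope.

(* Alphabet {0,...,N-1}; a substitution is sigma : nat -> list nat, only
   relevant on letters < N. *)

Definition sub_wf (N : nat) (sigma : nat -> list nat) : Prop :=
  forall a, (a < N)%nat -> sigma a <> [] /\ Forall (fun b => (b < N)%nat) (sigma a).

Definition submat (sigma : nat -> list nat) (a b : nat) : nat :=
  count_occ Nat.eq_dec (sigma b) a.

Definition nsum (lo hi : nat) (f : nat -> nat) : nat :=
  fold_right (fun l acc => (f l + acc)%nat) 0%nat (seq lo (hi - lo)).

Fixpoint blkpow (M : nat -> nat -> nat) (lo hi k : nat) (i j : nat) : nat :=
  match k with
  | O => if Nat.eqb i j then 1%nat else 0%nat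
  | S k' => nsum lo hi (fun l => (blkpow M lo hi k' i l * M l j)%nat)
  end.

Definition blk_primitive (M : nat -> nat -> nat) (lo hi : nat) : Prop :=
  (lo < hi)%nat /\
  exists k, (0 < k)%nat /\
    forall i j, (lo <= i < hi)%nat -> (lo <= j < hi)%nat -> (0 < blkpow M lo hi k i j)%nat.

(* Sum of the entries of the k-th power of the block (the entrywise l1-norm,
   which for a nonnegative matrix is a matrix norm). *)
Definition blk_norm (M : nat -> nat -> nat) (lo hi k : nat) : nat :=
  nsum lo hi (fun i => nsum lo hi (fun j => blkpow M lo hi k i j)).

(* Spectral radius, via Gelfand's formula rho = lim_k ||M^k||^(1/k). *)
Definition blk_spectral_radius (M : nat -> nat -> nat) (lo hi : nat) (r : R) : Prop :=
  Un_cv (fun k => Rpower (INR (blk_norm M lo hi (S k))) (/ INR (S k))) r.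

Definition subst_word (sigma : nat -> list nat) (w : list nat) : list nat :=
  flat_map sigma w.
Definition subst_iter (sigma : nat -> list nat) (k : nat) (w : list nat) : list nat :=
  Nat.iter k (subst_word sigma) w.

(* Tiles: (label a, translation vector u); the tile is I_a + u, i.e. the
   interval [u - xi a / 2, u + xi a / 2] labelled a. *)
Definition tile : Type := (nat * R)%type.
Definition tile_left (xi : nat -> R) (T : tile) : R := snd T - xi (fst T) / 2.
Definition tile_right (xi : nat -> R) (T : tile) : R := snd T + xi (fst T) / 2.

Fixpoint lay (xi : nat -> R) (x : R) (w : list nat) : list tile :=
  match w with
  | [] => []
  | a :: w' => (a, x + xi a / 2) :: lay xi (x + xi a) w'
  end.

(* Tile substitution: G(I_v + u) = G(I_v) + lam u, where G(I_v) consists of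
   consecutive translates of I_{w_1},...,I_{w_m} (sigma v = w_1...w_m)
   subdividing lam I_v. *)
Definition G_tile (sigma : nat -> list nat) (xi : nat -> R) (lam : R) (T : tile) : list tile :=
  lay xi (lam * snd T - lam * xi (fst T) / 2) (sigma (fst T)).
Definition G_patch (sigma : nat -> list nat) (xi : nat -> R) (lam : R) (P : list tile) : list tile :=
  flat_map (G_tile sigma xi lam) P.
Definition G_iter (sigma : nat -> list nat) (xi : nat -> R) (lam : R) (n : nat) (P : list tile) : list tile :=
  Nat.iter n (G_patch sigma xi lam) P.
Definition translate (u : R) (P : list tile) : list tile :=
  map (fun T => (fst T, snd T + u)) P.

Definition is_tiling (N : nat) (xi : nat -> R) (Tg : tile -> Prop) : Prop :=
  (forall T, Tg T -> (fst T < N)%nat) /\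
  (forall x, exists T, Tg T /\ tile_left xi T <= x <= tile_right xi T) /\
  (forall T1 T2, Tg T1 -> Tg T2 -> T1 <> T2 ->
     forall x, ~ (tile_left xi T1 < x < tile_right xi T1 /\
                  tile_left xi T2 < x < tile_right xi T2)).

Definition in_tiling_space (N : nat) (sigma : nat -> list nat) (xi : nat -> R) (lam : R)
  (Tg : tile -> Prop) : Prop :=
  is_tiling N xi Tg /\
  forall P : list tile, (forall T, In T P -> Tg T) ->
    exists a n u, (a < N)%nat /\
      forall T, In T P -> In T (translate u (G_iter sigma xi lam n [(a, 0)])).

(* N_T(B,t) <= bound, where B = {p,...,N-1}: every finite collection of
   (distinct) tiles of T with label in B contained in [0,t] has at most
   'bound' elements. *)
Definition count_B_le (N p : nat) (xi : nat -> R) (Tg : tile -> Prop) (t bound : R) : Prop :=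
  forall l : list tile, NoDup l ->
    (forall T, In T l -> Tg T /\ (p <= fst T < N)%nat /\
                         0 <= tile_left xi T /\ tile_right xi T <= t) ->
    INR (length l) <= bound.

(* Main.v *)
Require Import Defs.
From Stdlib Require Import Reals List Arith Lia Lra.
Import ListNotations.
Open Scope nat_scope. Open Scope bool_scope.

Definition fsum (s n : nat) (f : nat -> nat) : nat :=
  fold_right (fun l acc => f l + acc) 0 (seq s n).

Lemma nsum_fsum lo hi f : nsum lo hi f = fsum lo (hi - lo) f.
Proof. reflexivity. Qed.

Lemma fsum_S s n f : fsum s (S n) f = f s + fsum (S s) n f.
Proof. reflexivity. Qed.

Lemma fsum_add s n f g : fsum s n (fun l => f l + g l) = fsum s n f + fsum s n g.
Proof. revert s; induction n; intros s; simpl; [reflexivity|].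
  unfold fsum in *; simpl; rewrite IHn; lia. Qed.

Lemma fsum_mulc s n f c : fsum s n (fun l => c * f l) = c * fsum s n f.
Proof. revert s; induction n; intros s; unfold fsum in *; simpl; [lia|].
  rewrite IHn; lia. Qed.

Lemma fsum_ext s n f g : (forall l, s <= l < s + n -> f l = g l) -> fsum s n f = fsum s n g.
Proof. revert s; induction n; intros s H; unfold fsum in *; simpl; [reflexivity|].
  rewrite H by lia. rewrite (IHn (S s)); [reflexivity|]. intros; apply H; lia. Qed.

Lemma fsum_le s n f g : (forall l, s <= l < s + n -> f l <= g l) -> fsum s n f <= fsum s n g.
Proof. revert s; induction n; intros s H; unfold fsum in *; simpl; [lia|].
  specialize (IHn (S s)). assert (f s <= g s) by (apply H; lia).
  assert (fold_right (fun l acc => f l + acc) 0 (seq (S s) n) <=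
          fold_right (fun l acc => g l + acc) 0 (seq (S s) n)) by (apply IHn; intros; apply H; lia).
  lia. Qed.

Lemma fsum_delta s n c v :
  fsum s n (fun l => if Nat.eq_dec c l then v else 0) = if (s <=? c) && (c <? s + n) then v else 0.
Proof. revert s; induction n; intros s; unfold fsum in *; simpl.
  - destruct (s <=? c) eqn:E1; destruct (c <? s + 0) eqn:E2; simpl; auto;
    apply Nat.leb_le in E1; apply Nat.ltb_lt in E2; lia.
  - rewrite IHn. destruct (Nat.eq_dec c s).
    + subst. destruct ((S s <=? s)) eqn:E; [apply Nat.leb_le in E; lia|]. simpl.
      destruct (s <=? s) eqn:E1; [|apply Nat.leb_nle in E1; lia].
      destruct (s <? s + S n) eqn:E2; [|apply Nat.ltb_nlt in E2; lia]. simpl; lia.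
    + destruct (S s <=? c) eqn:E1; destruct (c <? S s + n) eqn:E2;
      destruct (s <=? c) eqn:E3; destruct (c <? s + S n) eqn:E4; simpl;
      repeat match goal with
      | H : (_ <=? _) = true |- _ => apply Nat.leb_le in H
      | H : (_ <=? _) = false |- _ => apply Nat.leb_nle in H
      | H : (_ <? _) = true |- _ => apply Nat.ltb_lt in H
      | H : (_ <? _) = false |- _ => apply Nat.ltb_nlt in H end; lia.
Qed.

Lemma fsum_swap s n f :
  fsum s n (fun i => fsum s n (fun j => f i j)) = fsum s n (fun j => fsum s n (fun i => f i j)).
Proof.
  assert (G: forall s1 n1 s2 n2, fsum s1 n1 (fun i => fsum s2 n2 (fun j => f i j)) =
                        fsum s2 n2 (fun j => fsum s1 n1 (fun i => f i j))).
  { intros s1 n1; revert s1; induction n1; intros s1 s2 n2.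
    - unfold fsum at 1; simpl. clear. revert s2; induction n2; intros; unfold fsum in *; simpl; auto.
    - rewrite fsum_S. rewrite IHn1.
      transitivity (fsum s2 n2 (fun j => f s1 j + fsum (S s1) n1 (fun i => f i j))).
      + rewrite fsum_add. reflexivity.
      + apply fsum_ext. intros; rewrite fsum_S; reflexivity. }
  apply G.
Qed.

Definition listsum (g : nat -> nat) (w : list nat) : nat :=
  fold_right (fun c s => g c + s) 0 w.

Lemma listsum_app g u v : listsum g (u ++ v) = listsum g u + listsum g v.
Proof. induction u; simpl; [reflexivity|]. unfold listsum in *; simpl; rewrite IHu; lia. Qed.

Lemma listsum_le g h w : (forall c, In c w -> g c <= h c) -> listsum g w <= listsum h w.
Proof. induction w; simpl; intros H; [lia|]. unfold listsum in *; simpl.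
  assert (g a <= h a) by auto. assert (fold_right (fun c s => g c + s) 0 w <= fold_right (fun c s => h c + s) 0 w) by auto. lia. Qed.

Section Words.
Variables (N p : nat) (sigma : nat -> list nat).
Hypothesis Hwf : sub_wf N sigma.
Hypothesis Hp : 0 < p < N.
Hypothesis Hzero : forall a b, p <= a < N -> b < p -> submat sigma a b = 0.

Lemma LS g w : Forall (fun b => b < N) w -> (forall c, c < p -> g c = 0) ->
  listsum g w = nsum p N (fun l => count_occ Nat.eq_dec w l * g l).
Proof.
  intros HF Hg; induction w as [|c w IH].
  - rewrite nsum_fsum. simpl. clear. generalize (N - p) as n. generalize p. intros s n; revert s; induction n; intros s; unfold fsum in *; simpl; auto.
  - inversion HF; subst. unfold listsum; simpl. fold (listsum g w). rewrite IH by auto.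
    rewrite !nsum_fsum.
    transitivity (fsum p (N - p) (fun l => (if Nat.eq_dec c l then g c else 0) + count_occ Nat.eq_dec w l * g l)).
    + rewrite fsum_add, fsum_delta.
      destruct (p <=? c) eqn:E1; destruct (c <? p + (N - p)) eqn:E2; simpl;
      repeat match goal with
      | H : (_ <=? _) = true |- _ => apply Nat.leb_le in H
      | H : (_ <=? _) = false |- _ => apply Nat.leb_nle in H
      | H : (_ <? _) = true |- _ => apply Nat.ltb_lt in H
      | H : (_ <? _) = false |- _ => apply Nat.ltb_nlt in H end; try lia.
      rewrite Hg by lia. lia.
    + apply fsum_ext; intros l _. simpl. destruct (Nat.eq_dec c l); subst; lia.
Qed.

Definition sw := subst_word sigma.
Definition si k w := subst_iter sigma k w.

Lemma si_app k u v : si k (u ++ v) = si k u ++ si k v.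
Proof. unfold si, subst_iter; induction k; simpl; auto. rewrite IHk. unfold subst_word. apply flat_map_app. Qed.

Lemma si_nil k : si k [] = [].
Proof. unfold si, subst_iter; induction k; simpl; auto. rewrite IHk; reflexivity. Qed.

Lemma si_cons k c u : si k (c :: u) = si k [c] ++ si k u.
Proof. rewrite <- si_app; reflexivity. Qed.

Lemma si_S k w : si (S k) w = si k (sw w).
Proof. unfold si, subst_iter. replace (S k) with (k + 1) by lia. rewrite Nat.iter_add. reflexivity. Qed.

Lemma si_add a b w : si (a + b) w = si a (si b w).
Proof. unfold si, subst_iter. apply Nat.iter_add. Qed.

Lemma sw_single c : sw [c] = sigma c.
Proof. unfold sw, subst_word; simpl; apply app_nil_r. Qed.

Lemma sw_ok w : Forall (fun b => b < N) w -> Forall (fun b => b < N) (sw w).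
Proof. intros H; induction H; simpl; auto. unfold sw, subst_word; simpl.
  apply Forall_app; split; auto. apply Hwf; auto. Qed.

Lemma si_ok k w : Forall (fun b => b < N) w -> Forall (fun b => b < N) (si k w).
Proof. revert w; induction k; intros w H; auto. rewrite si_S. apply IHk, sw_ok, H. Qed.

Lemma sigmaA c : c < p -> Forall (fun b => b < p) (sigma c).
Proof. intros Hc. apply Forall_forall. intros b Hb.
  assert (b < N) by (destruct (Hwf c ltac:(lia)) as [_ HF]; rewrite Forall_forall in HF; auto).
  destruct (Nat.lt_ge_cases b p); auto.
  specialize (Hzero b c ltac:(lia) Hc). unfold submat in Hzero.
  apply count_occ_not_In in Hzero. contradiction. Qed.

Lemma sw_A w : Forall (fun b => b < p) w -> Forall (fun b => b < p) (sw w).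
Proof. intros H; induction H; simpl; auto. unfold sw, subst_word; simpl.
  apply Forall_app; split; auto. apply sigmaA; auto. Qed.

Lemma si_A k w : Forall (fun b => b < p) w -> Forall (fun b => b < p) (si k w).
Proof. revert w; induction k; intros w H; auto. rewrite si_S. apply IHk, sw_A, H. Qed.

Definition isB c := if p <=? c then 1 else 0.
Definition cntB w := listsum isB w.

Lemma cntB_A w : Forall (fun b => b < p) w -> cntB w = 0.
Proof. intros H; induction H; auto. unfold cntB, listsum in *; simpl. rewrite IHForall.
  unfold isB. destruct (p <=? x) eqn:E; auto. apply Nat.leb_le in E; lia. Qed.

Lemma count_A k c i : c < p -> p <= i -> count_occ Nat.eq_dec (si k [c]) i = 0.
Proof. intros Hc Hi. apply count_occ_not_In. intros Hin.
  assert (HF := si_A k [c] ltac:(constructor; auto)). rewrite Forall_forall in HF.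
  specialize (HF _ Hin); lia. Qed.

Lemma count_si k w i : count_occ Nat.eq_dec (si k w) i = listsum (fun c => count_occ Nat.eq_dec (si k [c]) i) w.
Proof. induction w; [rewrite si_nil; reflexivity|].
  rewrite si_cons, count_occ_app, IHw. reflexivity. Qed.

Lemma cntB_si k w : cntB (si k w) = listsum (fun c => cntB (si k [c])) w.
Proof. induction w; [rewrite si_nil; reflexivity|].
  rewrite si_cons. unfold cntB at 1. rewrite listsum_app. fold (cntB (si k [a])). fold (cntB (si k w)).
  rewrite IHw. reflexivity. Qed.

Lemma blkpow_count m i j : p <= i < N -> p <= j < N ->
  blkpow (submat sigma) p N m i j = count_occ Nat.eq_dec (si m [j]) i.
Proof.
  revert i j; induction m; intros i j Hi Hj.
  - simpl. destruct (Nat.eqb i j) eqn:E.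
    + apply Nat.eqb_eq in E; subst. destruct (Nat.eq_dec j j); [reflexivity|congruence].
    + apply Nat.eqb_neq in E. destruct (Nat.eq_dec j i); [congruence|reflexivity].
  - simpl blkpow. replace (S m) with (m + 1) by lia. rewrite si_add.
    change (si 1 [j]) with (sw [j]). rewrite sw_single.
    rewrite count_si. rewrite (LS (fun c => count_occ Nat.eq_dec (si m [c]) i)).
    + rewrite !nsum_fsum. apply fsum_ext. intros l Hl. rewrite IHm by lia. unfold submat. lia.
    + apply Hwf; lia.
    + intros c Hc; apply count_A; lia.
Qed.

Lemma cntB_nsum w : Forall (fun b => b < N) w -> cntB w = nsum p N (fun l => count_occ Nat.eq_dec w l).
Proof. intros H. unfold cntB. rewrite LS; auto.
  - rewrite !nsum_fsum. apply fsum_ext. intros l Hl. unfold isB.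
    destruct (p <=? l) eqn:E; [lia|apply Nat.leb_nle in E; lia].
  - intros c Hc; unfold isB. destruct (p <=? c) eqn:E; [apply Nat.leb_le in E; lia|auto].
Qed.

Definition anorm m := blk_norm (submat sigma) p N m.

Lemma anorm_cols m : anorm m = nsum p N (fun j => cntB (si m [j])).
Proof.
  unfold anorm, blk_norm.
  transitivity (fsum p (N-p) (fun i => fsum p (N-p) (fun j => blkpow (submat sigma) p N m i j))); [reflexivity|].
  rewrite nsum_fsum, fsum_swap. apply fsum_ext. intros j Hj.
  rewrite cntB_nsum by (apply si_ok; constructor; auto; lia). rewrite nsum_fsum.
  apply fsum_ext. intros i Hi. apply blkpow_count; lia.
Qed.

Lemma cntB_le_anorm m c : c < N -> cntB (si m [c]) <= anorm m.
Proof.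
  intros Hc. destruct (Nat.lt_ge_cases c p).
  - rewrite cntB_A; [lia|]. apply si_A; constructor; auto.
  - rewrite anorm_cols, nsum_fsum.
    replace (N - p) with ((c - p) + S (N - 1 - c)) by lia.
    clear -H Hc. remember (cntB (si m [c])) as v.
    assert (G: forall s n1 n2 f, fsum s (n1 + n2) f = fsum s n1 f + fsum (s + n1) n2 f).
    { intros s n1; revert s; induction n1; intros; [simpl; rewrite Nat.add_0_r; reflexivity|].
      simpl (S n1 + n2). rewrite !fsum_S, IHn1. replace (S s + n1) with (s + S n1) by lia. lia. }
    rewrite G, fsum_S. replace (p + (c - p)) with c by lia. lia.
Qed.

Variable k : nat.
Hypothesis Hk : forall i j, p <= i < N -> p <= j < N -> 0 < blkpow (submat sigma) p N k i j.

Lemma supermult m n : anorm m * anorm n <= anorm (m + k + n).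
Proof.
  rewrite (anorm_cols (m + k + n)), (anorm_cols m), !nsum_fsum.
  rewrite Nat.mul_comm, <- fsum_mulc. apply fsum_le. intros b Hb.
  replace (m + k + n) with (n + (k + m)) by lia. rewrite !si_add.
  set (W := si m [b]).
  assert (HW : Forall (fun b => b < N) W) by (apply si_ok; constructor; auto; lia).
  rewrite cntB_si. rewrite (LS (fun c => cntB (si n [c]))).
  2: apply si_ok; auto.
  2: intros c Hc; apply cntB_A, si_A; constructor; auto.
  rewrite (anorm_cols n), Nat.mul_comm, nsum_fsum, <- fsum_mulc, nsum_fsum. apply fsum_le. intros l Hl.
  apply Nat.mul_le_mono_r.
  rewrite count_si. unfold cntB. apply listsum_le. intros c Hc.
  rewrite Forall_forall in HW. specialize (HW c Hc). unfold isB.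
  destruct (p <=? c) eqn:E; [|lia]. apply Nat.leb_le in E.
  rewrite <- blkpow_count by lia. apply Hk; lia.
Qed.

End Words.
Open Scope R_scope.

Lemma Rpower_inv_pow r s : 0 < r -> (0 < s)%nat -> Rpower (r ^ s) (/ INR s) = r.
Proof. intros Hr Hs. rewrite <- Rpower_pow by auto. rewrite Rpower_mult.
  rewrite Rinv_r. apply Rpower_1; auto. apply not_0_INR; lia. Qed.

Lemma perron_bound (N p : nat) (sigma : nat -> list nat) (rhoB : R) (k : nat)
  (Hwf : sub_wf N sigma) (Hp : (0 < p < N)%nat)
  (Hzero : forall a b, (p <= a < N)%nat -> (b < p)%nat -> submat sigma a b = 0%nat)
  (Hk : forall i j, (p <= i < N)%nat -> (p <= j < N)%nat -> (0 < blkpow (submat sigma) p N k i j)%nat)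
  (Hk0 : (0 < k)%nat)
  (HrhoB : blk_spectral_radius (submat sigma) p N rhoB) (Hr1 : rhoB > 1) :
  forall m, INR (anorm N p sigma m) <= rhoB ^ (m + k).
Proof.
  intros m. destruct (Rle_dec (INR (anorm N p sigma m)) (rhoB ^ (m + k))) as [H|H]; auto.
  exfalso. apply Rnot_le_lt in H. set (a := anorm N p sigma) in *.
  assert (Hpos : 1 < rhoB ^ (m + k)) by (apply Rlt_pow_R1; lia || lra).
  set (r := Rpower (INR (a m)) (/ INR (m + k))).
  assert (Ham : 0 < INR (a m)) by lra.
  assert (Hrm : r ^ (m + k) = INR (a m)).
  { unfold r. rewrite <- Rpower_pow. rewrite Rpower_mult. rewrite Rinv_l. apply Rpower_1; auto.
    apply not_0_INR; lia. unfold Rpower; apply exp_pos. }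
  assert (Hr0 : 0 < r) by (unfold r, Rpower; apply exp_pos).
  assert (Hrr : rhoB < r).
  { destruct (Rle_dec r rhoB) as [Hle|Hle]; [|lra].
    assert (r ^ (m + k) <= rhoB ^ (m+k)) by (apply pow_incr; lra). lra. }
  assert (Hit : forall j, (a m ^ (S j) <= a (m + j * (m + k)))%nat).
  { induction j.
    - simpl. rewrite Nat.mul_1_r, Nat.add_0_r. lia.
    - replace (m + S j * (m + k))%nat with (m + k + (m + j * (m + k)))%nat by lia.
      eapply Nat.le_trans; [|apply (supermult N p sigma Hwf Hp Hzero k Hk)].
      simpl (a m ^ S (S j))%nat. apply Nat.mul_le_mono_l; auto. }
  assert (Hlow : forall j, r ^ (m + j * (m + k))%nat <= INR (a (m + j * (m + k))%nat)).
  { intros j. eapply Rle_trans; [|apply le_INR, Hit]. rewrite pow_INR, <- Hrm, <- pow_mult.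
    apply Rle_pow. lra. lia. }
  destruct (HrhoB (r - rhoB) ltac:(lra)) as [N0 HN0].
  set (s := (m + (S N0) * (m + k))%nat).
  assert (Hs : (s = S (s - 1))%nat) by (unfold s; nia).
  specialize (HN0 (s - 1)%nat ltac:(unfold s; nia)).
  rewrite <- Hs in HN0. unfold Rdist in HN0.
  assert (Hge : r <= Rpower (INR (blk_norm (submat sigma) p N s)) (/ INR s)).
  { rewrite <- (Rpower_inv_pow r s) by (auto; unfold s; nia).
    apply Rle_Rpower_l. left; apply Rinv_0_lt_compat, lt_0_INR; unfold s; nia.
    split; [apply pow_lt; auto|]. apply Hlow. }
  apply Rabs_def2 in HN0. lra.
Qed.
Open Scope R_scope.

Section Tiles.
Variables (N p : nat) (sigma : nat -> list nat) (xi : nat -> R) (lam : R).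
Hypothesis Hwf : sub_wf N sigma.
Hypothesis Hp : (0 < p < N)%nat.
Hypothesis Hxipos : forall c, (c < N)%nat -> 0 < xi c.

Definition sxi (w : list nat) : R := fold_right (fun a s => xi a + s) 0 w.

Lemma sxi_app u v : sxi (u ++ v) = sxi u + sxi v.
Proof. induction u; simpl; [ring|]. unfold sxi in *; simpl; rewrite IHu; ring. Qed.

Lemma lay_app x u v : lay xi x (u ++ v) = lay xi x u ++ lay xi (x + sxi u) v.
Proof. revert x; induction u; intros x; simpl.
  - unfold sxi; simpl; rewrite Rplus_0_r; reflexivity.
  - rewrite IHu. replace (x + sxi (a :: u)) with (x + xi a + sxi u) by (unfold sxi; simpl; ring). rewrite Rplus_assoc. reflexivity. Qed.

Lemma translate_lay u x w : translate u (lay xi x w) = lay xi (x + u) w.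
Proof. revert x; induction w; intros x; simpl; auto. rewrite IHw. f_equal.
  - f_equal; simpl; ring.
  - f_equal; ring. Qed.

Hypothesis Heig : forall c, (c < N)%nat -> sxi (sigma c) = lam * xi c.

Lemma G_patch_lay x w : Forall (fun b => b < N)%nat w ->
  G_patch sigma xi lam (lay xi x w) = lay xi (lam * x) (sw sigma w).
Proof. intros H; revert x; induction H; intros y; simpl; auto.
  unfold G_patch in *; simpl. rewrite IHForall. unfold sw, subst_word; simpl.
  fold (subst_word sigma l). fold (sw sigma l).
  rewrite lay_app. unfold G_tile; simpl. rewrite Heig by auto. f_equal.
  - replace (lam * (y + xi x / 2) - lam * xi x / 2) with (lam * y) by field. reflexivity.
  - replace (lam * y + lam * xi x) with (lam * (y + xi x)) by ring. reflexivity. Qed.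

Lemma G_iter_lay n a : (a < N)%nat ->
  G_iter sigma xi lam n [(a, 0)] = lay xi (lam ^ n * (- xi a / 2)) (si sigma n [a]).
Proof. intros Ha. induction n.
  - simpl. unfold si, subst_iter; simpl. f_equal. f_equal. field.
  - unfold G_iter in *. simpl Nat.iter. rewrite IHn. rewrite G_patch_lay.
    + change (si sigma (S n) [a]) with (sw sigma (si sigma n [a])). f_equal. simpl; ring.
    + apply (si_ok N p sigma Hwf Hp). constructor; auto. Qed.

Lemma sxi_sw w : Forall (fun b => b < N)%nat w -> sxi (sw sigma w) = lam * sxi w.
Proof. intros H; induction H; simpl; [unfold sxi; simpl; ring|].
  unfold sw, subst_word; simpl. rewrite sxi_app. fold (subst_word sigma l). fold (sw sigma l).
  rewrite IHForall, Heig by auto. unfold sxi; simpl; ring. Qed.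

Lemma sxi_si m w : Forall (fun b => b < N)%nat w -> sxi (si sigma m w) = lam ^ m * sxi w.
Proof. revert w; induction m; intros w H; simpl; [unfold si, subst_iter; simpl; ring|].
  change (subst_word sigma (si sigma m w)) with (sw sigma (si sigma m w)).
  rewrite sxi_sw by (apply (si_ok N p sigma Hwf Hp); auto). rewrite IHm by auto. ring. Qed.

Lemma lay_in T x w : Forall (fun b => b < N)%nat w -> In T (lay xi x w) ->
  x <= tile_left xi T /\ tile_right xi T <= x + sxi w /\ In (fst T) w.
Proof. intros H; revert x; induction H; intros y Hin; simpl in Hin; [contradiction|].
  destruct Hin as [<-|Hin].
  - unfold tile_left, tile_right, sxi; simpl. fold (sxi l).
    assert (0 <= sxi l).
    { clear -H0 Hxipos. induction H0; unfold sxi; simpl; [lra|]. fold (sxi l).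
      specialize (Hxipos x H); lra. }
    specialize (Hxipos x H). split; [lra|split; [lra|auto]].
  - destruct (IHForall _ Hin) as [H1 [H2 H3]]. specialize (Hxipos x H).
    unfold sxi; simpl; fold (sxi l). split; [lra|split; [lra|auto]]. Qed.

Lemma count_lay x w : length (filter (fun T => Nat.leb p (fst T)) (lay xi x w)) = cntB p w.
Proof. revert x; induction w; intros x; simpl; auto.
  unfold cntB, listsum, isB; simpl. destruct (p <=? a); simpl; rewrite IHw; reflexivity. Qed.

Lemma count_le (l L : list tile) : NoDup l ->
  (forall T, In T l -> In T L /\ (p <= fst T)%nat) ->
  (length l <= length (filter (fun T => Nat.leb p (fst T)) L))%nat.
Proof. intros Hn H. apply NoDup_incl_length; auto. intros T HT.
  apply filter_In. destruct (H T HT). split; auto. apply Nat.leb_le; auto. Qed.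

End Tiles.
Open Scope R_scope.

Section Block.
Variables (N p : nat) (sigma : nat -> list nat) (xi : nat -> R) (lam : R).
Hypothesis Hwf : sub_wf N sigma.
Hypothesis Hp : (0 < p < N)%nat.
Hypothesis Hxipos : forall c, (c < N)%nat -> 0 < xi c.
Hypothesis Heig : forall c, (c < N)%nat -> sxi xi (sigma c) = lam * xi c.
Variables (t delta Cm : R) (m : nat).
Hypothesis Ht : 0 < t.
Hypothesis Hd : 0 < delta.
Hypothesis Hdel : forall c, (c < N)%nat -> delta <= lam ^ m * xi c.
Hypothesis HC : forall c, (c < N)%nat -> INR (cntB p (si sigma m [c])) <= Cm.
Hypothesis HC0 : 0 <= Cm.

Definition bnd (x : R) : R :=
  if Rle_dec 0 x then Rmax 0 ((t - x) / delta + 1) else t / delta + 2.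

Lemma bnd_nonneg x : 0 <= bnd x.
Proof. unfold bnd. destruct (Rle_dec 0 x). apply Rmax_l.
  assert (0 <= t / delta) by (unfold Rdiv; apply Rmult_le_pos; [lra|left; apply Rinv_0_lt_compat; lra]). lra. Qed.

Lemma bnd_le x : bnd x <= t / delta + 2.
Proof. unfold bnd. destruct (Rle_dec 0 x); [|lra].
  assert (x / delta >= 0) by (unfold Rdiv; apply Rle_ge, Rmult_le_pos; [lra|left; apply Rinv_0_lt_compat; lra]).
  assert (0 <= t / delta) by (unfold Rdiv; apply Rmult_le_pos; [lra|left; apply Rinv_0_lt_compat; lra]).
  replace ((t - x) / delta) with (t / delta - x / delta) by (field; lra).
  apply Rmax_lub; lra. Qed.

Lemma bnd_steps x S1 : delta <= S1 ->
  bnd (x + S1) <= bnd x /\ (x <= t -> 0 <= x + S1 -> 1 + bnd (x + S1) <= bnd x).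
Proof.
  intros HS. unfold bnd.
  assert (HE : S1 / delta >= 1).
  { apply Rle_ge. apply (Rmult_le_reg_r delta); auto. unfold Rdiv. rewrite Rmult_assoc, Rinv_l by lra. lra. }
  assert (0 <= t / delta) by (unfold Rdiv; apply Rmult_le_pos; [lra|left; apply Rinv_0_lt_compat; lra]).
  assert (E1 : (t - x) / delta = t / delta - x / delta) by (field; lra).
  assert (E2 : (t - (x + S1)) / delta = t / delta - x / delta - S1 / delta) by (field; lra).
  rewrite E1, E2.
  assert (Hx : 0 <= x -> 0 <= x / delta) by (intros; unfold Rdiv; apply Rmult_le_pos; [lra|left; apply Rinv_0_lt_compat; lra]).
  assert (Hx' : x <= t -> x / delta <= t / delta) by (intros; unfold Rdiv; apply Rmult_le_compat_r; [left; apply Rinv_0_lt_compat; lra|lra]).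
  assert (Hx2 : 0 <= x + S1 -> 0 <= x / delta + S1 / delta) by
      (intros; replace (x / delta + S1 / delta) with ((x + S1) / delta) by (field; lra);
       unfold Rdiv; apply Rmult_le_pos; [lra|left; apply Rinv_0_lt_compat; lra]).
  destruct (Rle_dec 0 (x + S1)); destruct (Rle_dec 0 x); try lra.
  - specialize (Hx r0). split.
    + apply Rmax_lub; [apply Rmax_l|]. eapply Rle_trans; [|apply Rmax_r]. lra.
    + intros Hxt _. specialize (Hx' Hxt).
      assert (Rmax 0 (t / delta - x / delta + 1) = t / delta - x / delta + 1) by (apply Rmax_right; lra).
      rewrite H0. unfold Rmax. destruct (Rle_dec 0 (t / delta - x / delta - S1 / delta + 1)); lra.
  - specialize (Hx2 r). split.
    + apply Rmax_lub; lra.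
    + intros _ _. unfold Rmax. destruct (Rle_dec 0 (t / delta - x / delta - S1 / delta + 1)); lra.
Qed.

Lemma split_in x W1 W2 T :
  Forall (fun b => b < N)%nat W1 -> Forall (fun b => b < N)%nat W2 ->
  In T (lay xi x (W1 ++ W2)) ->
  (tile_right xi T <= x + sxi xi W1 /\ In T (lay xi x W1)) \/
  (~ tile_right xi T <= x + sxi xi W1 /\ In T (lay xi (x + sxi xi W1) W2)).
Proof.
  intros H1 H2 Hin. rewrite lay_app in Hin. apply in_app_or in Hin. destruct Hin as [Hin|Hin].
  - left. split; auto. apply (lay_in N xi Hxipos T x W1 H1 Hin).
  - right. split; auto. destruct (lay_in N xi Hxipos T _ W2 H2 Hin) as [A [B Cc]].
    rewrite Forall_forall in H2. specialize (Hxipos _ (H2 _ Cc)).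
    unfold tile_left, tile_right in *. lra.
Qed.

Lemma block_bound u : Forall (fun b => b < N)%nat u -> forall x l, NoDup l ->
  (forall T, In T l -> In T (lay xi x (si sigma m u)) /\ (p <= fst T)%nat /\
      0 <= tile_left xi T /\ tile_right xi T <= t) ->
  INR (length l) <= Cm * bnd x.
Proof.
  intros Hu; induction Hu as [|c u Hc Hu IH]; intros x l Hnd Hl.
  - destruct l as [|T l].
    + simpl. apply Rmult_le_pos; auto. apply bnd_nonneg.
    + exfalso. destruct (Hl T (or_introl eq_refl)) as [H _]. rewrite si_nil in H. exact H.
  - set (W1 := si sigma m [c]). set (W2 := si sigma m u).
    assert (HW1 : Forall (fun b => b < N)%nat W1) by (apply (si_ok N p sigma Hwf Hp); constructor; auto).
    assert (HW2 : Forall (fun b => b < N)%nat W2) by (apply (si_ok N p sigma Hwf Hp); auto).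
    set (S1 := sxi xi W1).
    assert (HS1 : S1 = lam ^ m * xi c).
    { unfold S1, W1. rewrite (sxi_si N p sigma xi lam Hwf Hp Heig) by (constructor; auto).
      unfold sxi; simpl; ring. }
    assert (HdS : delta <= S1) by (rewrite HS1; auto).
    set (P := fun T : tile => if Rle_dec (tile_right xi T) (x + S1) then true else false).
    set (l1 := filter P l). set (l2 := filter (fun T => negb (P T)) l).
    assert (Hlen : length l = (length l1 + length l2)%nat) by (symmetry; apply filter_length).
    assert (Hin : forall T, In T l -> In T (lay xi x (W1 ++ W2))).
    { intros T HT. destruct (Hl T HT) as [H _]. rewrite (si_cons sigma m c u) in H. exact H. }
    assert (Hl2 : INR (length l2) <= Cm * bnd (x + S1)).
    { apply IH. apply NoDup_filter; auto.
      intros T HT. unfold l2 in HT. apply filter_In in HT. destruct HT as [HT HP].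
      destruct (Hl T HT) as [_ [Hb [Hc1 Hc2]]]. split; [|auto].
      destruct (split_in x W1 W2 T HW1 HW2 (Hin T HT)) as [[Hr _]|[_ H2]]; auto.
      unfold P in HP. fold S1 in Hr. destruct (Rle_dec (tile_right xi T) (x + S1)); [discriminate|contradiction]. }
    assert (Hl1in : forall T, In T l1 -> In T (lay xi x W1)).
    { intros T HT. unfold l1 in HT. apply filter_In in HT. destruct HT as [HT HP].
      destruct (split_in x W1 W2 T HW1 HW2 (Hin T HT)) as [[_ H1]|[Hr _]]; auto.
      unfold P in HP. fold S1 in Hr. destruct (Rle_dec (tile_right xi T) (x + S1)); [contradiction|discriminate]. }
    destruct (bnd_steps x S1 HdS) as [Hb1 Hb2].
    rewrite Hlen, plus_INR.
    destruct l1 as [|T0 l1'] eqn:El1.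
    + simpl. assert (Cm * bnd (x + S1) <= Cm * bnd x) by (apply Rmult_le_compat_l; auto). lra.
    + assert (HT0 : In T0 (T0 :: l1')) by (left; reflexivity).
      assert (HT0l : In T0 l) by (assert (In T0 l1) by (rewrite El1; auto); unfold l1 in H; apply filter_In in H; tauto).
      destruct (Hl T0 HT0l) as [_ [_ [Hc1 Hc2]]].
      destruct (lay_in N xi Hxipos T0 x W1 HW1 (Hl1in T0 HT0)) as [L1 [L2 L3]].
      assert (Hlr : tile_left xi T0 <= tile_right xi T0).
      { rewrite Forall_forall in HW1. specialize (Hxipos _ (HW1 _ L3)). unfold tile_left, tile_right; lra. }
      fold S1 in L2.
      assert (Hcc : INR (length (T0 :: l1')) <= Cm).
      { rewrite <- El1. eapply Rle_trans; [|apply (HC c); auto]. apply le_INR.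
        change (si sigma m [c]) with W1. rewrite <- (count_lay p xi x W1). apply count_le.
        - apply NoDup_filter; auto.
        - intros T HT. assert (HT1 : In T l1) by exact HT.
          split; [apply Hl1in; rewrite <- El1; exact HT1|]. unfold l1 in HT1. apply filter_In in HT1.
          destruct (Hl T (proj1 HT1)) as [_ [Hb _]]; auto. }
      specialize (Hb2 ltac:(lra) ltac:(lra)).
      assert (Cm * (1 + bnd (x + S1)) <= Cm * bnd x) by (apply Rmult_le_compat_l; auto). lra.
Qed.
End Block.
Open Scope R_scope.

Lemma cv_const c : Un_cv (fun _ => c) c.
Proof. intros e He. exists 0%nat. intros. unfold Rdist. rewrite Rminus_diag, Rabs_R0. lra. Qed.

Lemma cv_shift u l : Un_cv u l -> Un_cv (fun k => u (S k)) l.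
Proof. intros H e He. destruct (H e He) as [N0 HN]. exists N0. intros n Hn. apply HN. lia. Qed.

Lemma cv_list (f : nat -> nat -> R) (g : nat -> R) w :
  (forall c, In c w -> Un_cv (f c) 1) ->
  Un_cv (fun k => fold_right (fun c s => g c * f c k + s) 0 w) (fold_right (fun c s => g c + s) 0 w).
Proof. induction w; intros H; simpl. apply cv_const.
  replace (g a + fold_right (fun c s => g c + s) 0 w) with (g a * 1 + fold_right (fun c s => g c + s) 0 w) by ring.
  apply CV_plus. apply CV_mult. apply cv_const. apply H; left; auto. apply IHw. intros; apply H; right; auto. Qed.

Lemma length_si (sigma : nat -> list nat) k w :
  length (si sigma k w) = fold_right (fun c s => (length (si sigma k [c]) + s)%nat) 0%nat w.
Proof. induction w; simpl. rewrite si_nil; auto. rewrite si_cons, length_app, IHw. reflexivity. Qed.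

Lemma eigen (N p : nat) (sigma : nat -> list nat) (xi : nat -> R) (lam : R)
  (Hwf : sub_wf N sigma) (Hp : (0 < p < N)%nat) (Hlam : 0 < lam)
  (Hxi : forall i, (i < N)%nat ->
     0 < xi i /\
     Un_cv (fun k => INR (length (subst_iter sigma k [i])) / (xi i * lam ^ k)) 1) :
  forall c, (c < N)%nat -> sxi xi (sigma c) = lam * xi c.
Proof.
  intros i Hi. destruct (Hxi i Hi) as [Hxii Hcv].
  set (f := fun c k => INR (length (subst_iter sigma k [c])) / (xi c * lam ^ k)).
  set (g := fun c => xi c / (lam * xi i)).
  assert (HF : Forall (fun b => b < N)%nat (sigma i)) by (apply Hwf; auto).
  assert (Heq : forall k, f i (S k) = fold_right (fun c s => g c * f c k + s) 0 (sigma i)).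
  { intros k. unfold f. change (subst_iter sigma (S k) [i]) with (si sigma (S k) [i]).
    rewrite (si_S N p sigma Hp), sw_single, length_si.
    rewrite Forall_forall in HF.
    assert (G : forall w, (forall c, In c w -> (c < N)%nat) ->
      INR (fold_right (fun c s => (length (si sigma k [c]) + s)%nat) 0%nat w) / (xi i * lam ^ S k) =
      fold_right (fun c s => g c * (INR (length (subst_iter sigma k [c])) / (xi c * lam ^ k)) + s) 0 w).
    { induction w as [|c w IH]; intros Hw; simpl. unfold Rdiv; ring.
      rewrite plus_INR. rewrite <- IH by (intros; apply Hw; right; auto).
      unfold g. assert (0 < xi c) by (apply Hxi, Hw; left; auto).
      assert (0 < lam ^ k) by (apply pow_lt; auto).
      change (subst_iter sigma k [c]) with (si sigma k [c]). simpl (lam ^ S k). field. repeat split; lra. }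
    apply G. auto. }
  assert (H1 : Un_cv (fun k => fold_right (fun c s => g c * f c k + s) 0 (sigma i)) 1).
  { apply (Un_cv_ext (fun k => f i (S k))). intros; apply Heq. apply cv_shift. exact Hcv. }
  assert (H2 := cv_list f g (sigma i)).
  assert (H3 : fold_right (fun c s => g c + s) 0 (sigma i) = 1).
  { eapply UL_sequence; [apply H2|exact H1]. intros c Hc. rewrite Forall_forall in HF.
    apply Hxi; auto. }
  assert (G2 : forall w, fold_right (fun c s => g c + s) 0 w = sxi xi w / (lam * xi i)).
  { induction w; simpl. unfold sxi; simpl; unfold Rdiv; ring. rewrite IHw. unfold g, sxi; simpl. field. lra. }
  rewrite G2 in H3. apply (Rmult_eq_compat_r (lam * xi i)) in H3. unfold Rdiv in H3.
  rewrite Rmult_assoc, Rinv_l in H3 by (apply Rgt_not_eq; apply Rmult_lt_0_compat; lra). lra.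
Qed.

Lemma xi_min (N : nat) (xi : nat -> R) : (forall c, (c < N)%nat -> 0 < xi c) ->
  exists e, 0 < e /\ forall c, (c < N)%nat -> e <= xi c.
Proof. induction N; intros H.
  - exists 1; split; [lra|]. intros; lia.
  - destruct IHN as [e [He He']]. intros; apply H; lia.
    exists (Rmin e (xi N)). split. apply Rmin_glb_lt; auto.
    intros c Hc. destruct (Nat.eq_dec c N). subst; apply Rmin_r.
    eapply Rle_trans; [apply Rmin_l|]. apply He'; lia. Qed.

Lemma floor_pow (lam t : R) : 1 < lam -> 1 <= t -> exists m, lam ^ m <= t < lam ^ (S m).
Proof.
  intros Hl Ht. destruct (INR_archimed (lam - 1) t ltac:(lra)) as [n Hn].
  assert (Hb : t < lam ^ n).
  { assert (1 + INR n * (lam - 1) <= (1 + (lam - 1)) ^ n) by (apply poly; lra).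
    replace (1 + (lam - 1)) with lam in H by ring. lra. }
  clear Hn. induction n. simpl in Hb; lra.
  destruct (Rle_dec (lam ^ n) t). exists n; split; auto. apply IHn; lra. Qed.
Open Scope R_scope.

Theorem mainTheorem10
  (N p : nat) (sigma : nat -> list nat) (xi : nat -> R) (rhoA rhoB : R)
  (Hwf : sub_wf N sigma)
  (Hp : (0 < p < N)%nat)
  (Hzero : forall a b, (p <= a < N)%nat -> (b < p)%nat -> submat sigma a b = 0%nat)
  (HC : exists a b, (a < p)%nat /\ (p <= b < N)%nat /\ submat sigma a b <> 0%nat)
  (HA : blk_primitive (submat sigma) 0 p)
  (HB : blk_primitive (submat sigma) p N)
  (HrhoA : blk_spectral_radius (submat sigma) 0 p rhoA)
  (HrhoB : blk_spectral_radius (submat sigma) p N rhoB)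
  (Hrho : rhoA > rhoB /\ rhoB > 1)
  (Hxi : forall i, (i < N)%nat ->
     0 < xi i /\
     Un_cv (fun k => INR (length (subst_iter sigma k [i])) / (xi i * rhoA ^ k)) 1) :
  exists K, K > 0 /\
    forall Tg : tile -> Prop, in_tiling_space N sigma xi rhoA Tg ->
      forall t, t > 0 ->
        count_B_le N p xi Tg t (K * Rpower t (ln rhoB / ln rhoA)).
Proof.
  destruct Hrho as [HAB HB1]. set (lam := rhoA).
  assert (Hl1 : 1 < lam) by (unfold lam; lra).
  assert (Hxipos : forall c, (c < N)%nat -> 0 < xi c) by (intros; apply Hxi; auto).
  assert (Heig := eigen N p sigma xi lam Hwf Hp ltac:(lra) Hxi).
  destruct HB as [_ [k [Hk0 Hk]]].
  assert (Hper := perron_bound N p sigma rhoB k Hwf Hp Hzero Hk Hk0 HrhoB HB1).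
  assert (HCm : forall m c, (c < N)%nat -> INR (cntB p (si sigma m [c])) <= rhoB ^ (m + k)).
  { intros m c Hc. eapply Rle_trans; [apply le_INR, (cntB_le_anorm N p sigma Hwf Hp Hzero); auto|]. apply Hper. }
  destruct (xi_min N xi Hxipos) as [e [He He']].
  set (alpha := ln rhoB / ln lam).
  assert (HlnA : 0 < ln lam) by (rewrite <- ln_1; apply ln_increasing; lra).
  assert (HlnB : 0 < ln rhoB) by (rewrite <- ln_1; apply ln_increasing; lra).
  assert (HlnAB : ln rhoB < ln lam) by (apply ln_increasing; unfold lam; lra).
  assert (Hal0 : 0 < alpha) by (unfold alpha, Rdiv; apply Rmult_lt_0_compat; auto; apply Rinv_0_lt_compat; auto).
  assert (Hal1 : alpha < 1).
  { unfold alpha. apply (Rmult_lt_reg_r (ln lam)); auto. unfold Rdiv. rewrite Rmult_assoc, Rinv_l; lra. }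
  set (D := lam / e + 2).
  assert (HD : 1 <= D) by (unfold D; assert (0 < lam / e) by (apply Rdiv_lt_0_compat; lra); lra).
  set (em := Rmin e 1).
  assert (Hem : 0 < em) by (apply Rmin_glb_lt; lra).
  assert (HrBk : 0 < rhoB ^ k) by (apply pow_lt; lra).
  exists (D * rhoB ^ k / em). split.
  { apply Rdiv_lt_0_compat; auto. apply Rmult_lt_0_compat; lra. }
  intros Tg [Htil Hsub] t Ht l Hnd Hl.
  fold lam. fold alpha.
  destruct (Hsub l (fun T HT => proj1 (Hl T HT))) as [a [n [u0 [Ha Hin]]]].
  set (x0 := lam ^ n * (- xi a / 2) + u0).
  assert (Hin' : forall T, In T l -> In T (lay xi x0 (si sigma n [a]))).
  { intros T HT. specialize (Hin T HT). rewrite (G_iter_lay N p sigma xi lam Hwf Hp Heig n a Ha) in Hin.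
    rewrite translate_lay in Hin. exact Hin. }
  assert (Hm : exists m, (1 <= t -> lam ^ m <= t) /\ t < lam ^ S m /\ (t < 1 -> m = 0%nat)).
  { destruct (Rle_dec 1 t).
    - destruct (floor_pow lam t Hl1 r) as [m [H1 H2]]. exists m. split; [auto|split; [auto|intros; lra]].
    - exists 0%nat. split; [intros; lra|]. split; [simpl; lra|auto]. }
  destruct Hm as [m [Hm1 [Hm2 Hm3]]].
  assert (Hcount : INR (length l) <= rhoB ^ (m + k) * D).
  { destruct (le_lt_dec m n) as [Hmn|Hmn].
    - replace n with (m + (n - m))%nat in Hin' by lia. rewrite si_add in Hin'.
      set (delta := lam ^ m * e).
      assert (Hd : 0 < delta) by (unfold delta; apply Rmult_lt_0_compat; auto; apply pow_lt; lra).
      assert (Hbb := block_bound N p sigma xi lam Hwf Hp Hxipos Heig t delta (rhoB ^ (m + k)) m Ht Hd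
        ltac:(intros c Hc; unfold delta; apply Rmult_le_compat_l; [left; apply pow_lt; lra|auto])
        (fun c Hc => HCm m c Hc) ltac:(left; apply pow_lt; lra)
        (si sigma (n - m) [a]) ltac:(apply (si_ok N p sigma Hwf Hp); constructor; auto)
        x0 l Hnd).
      assert (INR (length l) <= rhoB ^ (m + k) * bnd t delta x0).
      { apply Hbb. intros T HT. destruct (Hl T HT) as [_ [H1 [H2 H3]]]. split; [apply Hin'; auto|]. split; [lia|auto]. }
      eapply Rle_trans; [exact H|]. apply Rmult_le_compat_l; [left; apply pow_lt; lra|].
      eapply Rle_trans; [apply bnd_le; auto|]. unfold D. apply Rplus_le_compat_r.
      unfold delta. apply (Rmult_le_reg_r (lam ^ m * e)). apply Rmult_lt_0_compat; auto; apply pow_lt; lra.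
      unfold Rdiv. rewrite Rmult_assoc, Rinv_l by (apply Rgt_not_eq, Rmult_lt_0_compat; auto; apply pow_lt; lra).
      replace (lam * / e * (lam ^ m * e)) with (lam ^ S m) by (simpl; field; lra). lra.
    - assert (H : (length l <= cntB p (si sigma n [a]))%nat).
      { rewrite <- (count_lay p xi x0). apply count_le; auto. intros T HT. split; [apply Hin'; auto|].
        apply Hl; auto. }
      apply le_INR in H. eapply Rle_trans; [exact H|]. eapply Rle_trans; [apply HCm; auto|].
      rewrite <- (Rmult_1_r (rhoB ^ (n + k))). apply Rmult_le_compat; try lra.
      left; apply pow_lt; lra. apply Rle_pow; lia || lra. }
  assert (HRp : 0 < Rpower t alpha) by (unfold Rpower; apply exp_pos).
  destruct (Rle_dec 1 t) as [Ht1|Ht1].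
  -
    assert (Hpm : rhoB ^ m <= Rpower t alpha).
    { rewrite <- (Rpower_pow m rhoB) by lra. unfold Rpower.
      assert (INR m * ln rhoB <= alpha * ln t).
      { assert (ln (lam ^ m) <= ln t).
        { destruct (Rle_lt_or_eq_dec _ _ (Hm1 Ht1)) as [Hlt|Heq]; [left; apply ln_increasing; auto; apply pow_lt; lra|rewrite Heq; lra]. }
        rewrite ln_pow in H by lra. unfold alpha.
        replace (INR m * ln rhoB) with (ln rhoB / ln lam * (INR m * ln lam)) by (field; lra).
        apply Rmult_le_compat_l; auto. left; auto. }
      destruct (Rle_lt_or_eq_dec _ _ H) as [Hlt|Heq]; [left; apply exp_increasing; auto|rewrite Heq; lra]. }
    rewrite pow_add in Hcount.
    assert (em <= 1) by apply Rmin_r.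
    assert (rhoB ^ m * rhoB ^ k * D <= D * rhoB ^ k * Rpower t alpha).
    { replace (D * rhoB ^ k * Rpower t alpha) with (Rpower t alpha * rhoB ^ k * D) by ring.
      apply Rmult_le_compat_r; [lra|]. apply Rmult_le_compat_r; lra. }
    assert (D * rhoB ^ k * Rpower t alpha <= D * rhoB ^ k / em * Rpower t alpha).
    { apply Rmult_le_compat_r; [lra|]. unfold Rdiv. rewrite <- (Rmult_1_r (D * rhoB ^ k)) at 1.
      apply Rmult_le_compat_l. apply Rmult_le_pos; lra. rewrite <- Rinv_1. apply Rinv_le_contravar; lra. }
    lra.
  - apply Rnot_le_lt in Ht1. rewrite (Hm3 Ht1) in Hcount. simpl in Hcount.
    destruct l as [|T l'].
    + simpl. apply Rmult_le_pos; [|lra]. left. apply Rdiv_lt_0_compat; auto. apply Rmult_lt_0_compat; lra.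
    + destruct (Hl T (or_introl eq_refl)) as [_ [HpT [HL HR]]].
      assert (Hte : e <= t).
      { specialize (He' (fst T) ltac:(lia)). unfold tile_left, tile_right in *. lra. }
      assert (Htal : t <= Rpower t alpha).
      { unfold Rpower. rewrite <- (exp_ln t) at 1 by lra.
        assert (ln t < 0) by (rewrite <- ln_1; apply ln_increasing; lra).
        left; apply exp_increasing. nra. }
      assert (em <= Rpower t alpha) by (assert (em <= e) by apply Rmin_l; lra).
      assert (D * rhoB ^ k <= D * rhoB ^ k / em * Rpower t alpha).
      { unfold Rdiv. rewrite Rmult_assoc. rewrite <- (Rmult_1_r (D * rhoB ^ k)) at 1.
        apply Rmult_le_compat_l. apply Rmult_le_pos; lra.
        apply (Rmult_le_reg_l em); auto. rewrite <- Rmult_assoc, Rinv_r by lra. lra. }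
      lra.
Qed.
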